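(* Let $H=(V,\mathcal E)$ be a hypergraph with maximum degree $\Delta$ in which every hyperedge has at most $k$ vertices. Let $B\subseteq\mathcal E$ be a set of hyperedges inducing a connected subgraph of $\mathrm L^2(H)$, and let $e^*\in B$. Then there exists a $\{2,3\}$-tree $T\subseteq B$ in $\mathrm{Lin}(H)$ with $e^*\in T$ and $|T|\ge\frac{|B|}{k\Delta}$.
   Context: $\mathrm{Lin}(H)$ is the line graph of $H$: its vertices are the hyperedges of $H$, two distinct hyperedges adjacent iff they share a vertex. $\mathrm L^2(H)$ is the graph on the hyperedges of $H$ in which two hyperedges are adjacent iff their distance in $\mathrm{Lin}(H)$ is at most $2$. For a graph $G$, a set $T$ of its vertices is a $\{2,3\}$-tree if (1) $\mathrm{dist}_G(u,w)\ge 2$ for all distinct $u,w\in T$, and (2) the graph on $T$ joining $u,w$ whenever $\mathrm{dist}_G(u,w)\in\{2,3\}$ is connected. *)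

(* Defs.v *)
From mathcomp Require Import all_boot.
Set Implicit Arguments. Unset Strict Implicit. Unset Printing Implicit Defensive.

Section Hypergraph.
Variable V : finType.
Variable E : {set {set V}}.

Definition hdeg (v : V) : nat := #|[set e in E | v \in e]|.

Definition lin_adj (e f : {set V}) : bool :=
  [&& e \in E, f \in E, e != f & ~~ [disjoint e & f]].

Fixpoint lin_within (n : nat) (e f : {set V}) : bool :=
  match n with
  | 0 => e == f
  | n'.+1 => lin_within n' e f || [exists g, lin_within n' e g && lin_adj g f]
  end.

Definition L2_adj (e f : {set V}) : bool :=
  [&& e \in E, f \in E, e != f & lin_within 2 e f].

Definition L2_connected (B : {set {set V}}) : Prop :=
  forall e f, e \in B -> f \in B ->
    connect [rel x y | [&& x \in B, y \in B & L2_adj x y]] e f.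

Definition tree23 (T : {set {set V}}) : Prop :=
  (forall u w, u \in T -> w \in T -> u != w -> ~~ lin_within 1 u w) /\
  (forall u w, u \in T -> w \in T ->
     connect [rel x y | [&& x \in T, y \in T,
                           lin_within 3 x y & ~~ lin_within 1 x y]] u w).
End Hypergraph.

(* Main.v *)
Require Import Defs.
From mathcomp Require Import all_boot.
From mathcomp Require Import zify.

Section Aux.
Variable V : finType.
Variable E : {set {set V}}.

Lemma lin_adj_sym e f : lin_adj E e f = lin_adj E f e.
Proof.
by rewrite /lin_adj; case: (e \in E); case: (f \in E); rewrite //= eq_sym disjoint_sym.
Qed.

Lemma lin_within1 e f : lin_within E 1 e f = (e == f) || lin_adj E e f.
Proof.
rewrite /=; congr (_ || _); apply/existsP/idP => [[g /andP[/eqP <- //]]|H].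
by exists e; rewrite eqxx.
Qed.

Lemma lin_within_mono n e f : lin_within E n e f -> lin_within E n.+1 e f.
Proof. by move=> H /=; rewrite H. Qed.

Lemma lin_within_le m n e f : m <= n -> lin_within E m e f -> lin_within E n e f.
Proof.
move=> mn; elim: n mn => [|n IH]; first by rewrite leqn0 => /eqP ->.
rewrite leq_eqVlt => /orP[/eqP -> //|]; rewrite ltnS => /IH H /H.
exact: lin_within_mono.
Qed.

Lemma lin_within_trans m n a b c :
  lin_within E m a b -> lin_within E n b c -> lin_within E (m + n) a c.
Proof.
move=> Hab; elim: n c => [|n IH] c /=.
  by move=> /eqP <-; rewrite addn0.
rewrite addnS /= => /orP[/IH -> //|/existsP[x /andP[/IH Hx Hxc]]].
by apply/orP; right; apply/existsP; exists x; rewrite Hx.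
Qed.

Lemma lin_within_sym n e f : lin_within E n e f -> lin_within E n f e.
Proof.
elim: n e f => [|n IH] e f /=; first by rewrite eq_sym.
case/orP => [/IH -> //|/existsP[x /andP[/IH Hx Hxf]]].
have H1 : lin_within E 1 f x by rewrite lin_within1 lin_adj_sym Hxf orbT.
by have := @lin_within_trans 1 n _ _ _ H1 Hx.
Qed.

Lemma path_cross (T : finType) (r : rel T) (P : pred T) a p :
  path r a p -> P a -> ~~ P (last a p) -> exists x y, [/\ r x y, P x & ~~ P y].
Proof.
elim: p a => [|b p IH] a /=; first by move=> _ ->.
case/andP => rab pb Pa; case Pb: (P b).
  exact: IH.
by move=> _; exists a, b; rewrite Pa Pb.
Qed.

Lemma card_bigcup_le (I : finType) (P : pred I) (F : I -> {set V}) :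
  #|\bigcup_(i | P i) F i| <= \sum_(i | P i) #|F i|.
Proof.
elim/big_rec2: _ => [|i n A _ H]; first by rewrite cards0.
by apply: leq_trans (leq_card_setU _ _) _; rewrite leq_add2l.
Qed.

Lemma card_bigcup_le2 (I : finType) (P : pred I) (F : I -> {set {set V}}) :
  #|\bigcup_(i | P i) F i| <= \sum_(i | P i) #|F i|.
Proof.
elim/big_rec2: _ => [|i n A _ H]; first by rewrite cards0.
by apply: leq_trans (leq_card_setU _ _) _; rewrite leq_add2l.
Qed.

End Aux.

Theorem lemma4p5 (V : finType) (E : {set {set V}}) (k Delta : nat)
  (k_gt0 : 0 < k) (Delta_gt0 : 0 < Delta)
  (hdeg_le : forall v : V, hdeg E v <= Delta)
  (size_le : forall e, e \in E -> #|e| <= k)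
  (B : {set {set V}}) (BsubE : B \subset E) (Bconn : L2_connected E B)
  (estar : {set V}) (estarB : estar \in B) :
  exists T : {set {set V}},
    [/\ T \subset B, tree23 E T, estar \in T & #|B| <= k * Delta * #|T|].
Proof.
pose N t := [set f in E | lin_within E 1 t f].
have cardN : forall t, t \in E -> #|N t| <= k * Delta.
  move=> t tE; have [t0|/set0Pn[v0 v0t]] := eqVneq t set0.
    have : N t \subset [set t].
      apply/subsetP => f; rewrite !inE lin_within1 => /andP[_ /orP[/eqP <- //|]].
      move=> H; exfalso; move: H; case/and4P => _ _ _ /pred0Pn[v /andP[H _]]; have : v \in t := H; by rewrite t0 inE.
    move=> Hs; have H := subset_leq_card Hs; rewrite cards1 in H; apply: leq_trans H _.
    by rewrite muln_gt0 k_gt0.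
  have : N t \subset \bigcup_(v in t) [set e in E | v \in e].
    apply/subsetP => f; rewrite !inE lin_within1 => /andP[fE /orP[/eqP <-|]].
      by apply/bigcupP; exists v0; rewrite // inE tE.
    case/and4P => _ _ _ /pred0Pn[v /andP[vt vf]].
    by apply/bigcupP; exists v; rewrite // inE fE.
  move=> Hs; have H := subset_leq_card Hs; apply: leq_trans H _.
  apply: leq_trans (@card_bigcup_le2 _ _ _ _) _.
  apply: (@leq_trans (\sum_(v in t) Delta)).
    by apply: leq_sum => v _; exact: hdeg_le.
  by rewrite sum_nat_const leq_mul2r size_le // orbT.
have count : forall T : {set {set V}}, T \subset B ->
    [forall f in B, exists t in T, lin_within E 1 t f] -> #|B| <= k * Delta * #|T|.
  move=> T TB /forall_inP cov.
  have : B \subset \bigcup_(t in T) N t.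
    apply/subsetP => f fB; have /exists_inP[t tT Htf] := cov f fB.
    by apply/bigcupP; exists t; rewrite // inE Htf (subsetP BsubE).
  move=> Hs; have H := subset_leq_card Hs; apply: leq_trans H _.
  apply: leq_trans (@card_bigcup_le2 _ _ _ _) _.
  apply: (@leq_trans (\sum_(t in T) (k * Delta))).
    apply: leq_sum => t tT; apply: cardN.
    by apply: (subsetP BsubE); apply: (subsetP TB).
  by rewrite sum_nat_const mulnC.
pose rT (T : {set {set V}}) := [rel x y | [&& x \in T, y \in T,
                           lin_within E 3 x y & ~~ lin_within E 1 x y]].
have grow : forall T : {set {set V}}, T \subset B -> tree23 E T -> estar \in T ->
    ~~ [forall f in B, exists t in T, lin_within E 1 t f] ->
    exists y, [/\ y \in B, y \notin T & tree23 E (y |: T)].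
  move=> T TB [T1 T2] esT /forall_inPn[f fB /exists_inPn nf].
  have /connectP[p pp lp] := Bconn _ _ estarB fB.
  pose P := fun x => [exists t in T, lin_within E 1 t x].
  have Pe : P estar by apply/exists_inP; exists estar; rewrite //= eqxx.
  have nPf : ~~ P (last estar p).
    by rewrite -lp; apply/exists_inPn => t tT; exact: nf.
  have [x [y [/and3P[xB yB /and4P[_ _ _ Hxy]] /exists_inP[t tT Htx] /exists_inPn nPy]]]
    := @path_cross _ _ P _ _ pp Pe nPf.
  have Hty : lin_within E 3 t y := @lin_within_trans _ _ 1 2 _ _ _ Htx Hxy.
  have yT : y \notin T.
    by apply/negP => yT; have := nPy y yT; rewrite /= eqxx.
  exists y; split => //; split.
    move=> u w; rewrite !inE => /orP[/eqP->|uT] /orP[/eqP->|wT]; rewrite ?eqxx //.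
    - move=> _; apply/negP => /lin_within_sym H; have := nPy w wT; by rewrite H.
    - by move=> _; apply: nPy.
    - exact: T1.
  have lift : forall u w, u \in T -> w \in T -> connect (rT (y |: T)) u w.
    move=> u w uT wT; apply: connect_sub (T2 u w uT wT) => a b /and4P[aT bT H1 H2].
    by apply: connect1; apply/and4P; split; rewrite ?inE ?aT ?bT ?orbT.
  have ety : connect (rT (y |: T)) t y.
    by apply: connect1; apply/and4P; split; rewrite ?inE ?tT ?eqxx ?orbT //; apply: nPy.
  have eyt : connect (rT (y |: T)) y t.
    apply: connect1; apply/and4P; split; rewrite ?inE ?tT ?eqxx ?orbT //; first exact: lin_within_sym.
    by apply/negP => /lin_within_sym H; have := nPy t tT; rewrite H.
  move=> u w /setU1P[->|uT] /setU1P[->|wT].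
  - exact: connect0.
  - exact: connect_trans eyt (lift _ _ tT wT).
  - exact: connect_trans (lift _ _ uT tT) ety.
  - exact: lift.
have main : forall n (T : {set {set V}}), #|B| - #|T| <= n -> T \subset B -> tree23 E T -> estar \in T ->
    exists T : {set {set V}},
    [/\ T \subset B, tree23 E T, estar \in T & #|B| <= k * Delta * #|T|].
  elim=> [|n IH] T Hn TB Ttr esT.
    exists T; split => //; apply: count => //.
    have H : #|B| <= #|T| by lia.
    have /eqP TBe : T == B by rewrite eqEcard TB.
    by apply/forall_inP => f fB; apply/exists_inP; exists f; [by rewrite TBe | by rewrite /= eqxx].
  case cov: [forall f in B, exists t in T, lin_within E 1 t f].
    by exists T; split => //; apply: count.
  have [y [yB yT ytr]] := grow T TB Ttr esT (negbT cov).
  have yTB : y |: T \subset B by rewrite subUset sub1set yB TB.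
  have := subset_leq_card yTB; rewrite cardsU1 yT /= => Hc.
  apply: (IH (y |: T)) => //; last by rewrite inE esT orbT.
  rewrite cardsU1 yT /=; move: Hn Hc; move: #|B| #|T| => a b; lia.
apply: (main #|B| [set estar]) => //.
- exact: leq_subr.
- by rewrite sub1set.
- split.
    by move=> u w; rewrite !inE => /eqP-> /eqP->; rewrite eqxx.
  by move=> u w; rewrite !inE => /eqP-> /eqP->; exact: connect0.
- by rewrite inE.
Qed.
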